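(* Let $p\in[1,\infty]$ and let the plant, controller operators, concatenated controller and update instants be as described in the context. Let $\bar\gamma>0$ and suppose that all operators $\mathcal{M}^{(i)}$, $i\ge 0$, satisfy $\gamma(\mathcal{M}^{(i)})\le\bar\gamma$. Suppose there exist a non-negative scalar sequence $\mathbf r=\{r^{(i)}\}_{i\ge1}\in\ell_p$ and thresholds $\epsilon^{(i)}>0$, $i\ge1$, such that $$\gamma(\mathcal F)\,\big(\gamma(\mathcal{M}^{(i)})+1\big)\,\epsilon^{(i)}\le r^{(i)}\qquad\forall i\ge1,$$ and suppose that every controller update is performed only when it is admissible, i.e. at every update instant $t_i$, $i\ge1$, $$|x_{t_i}|\le\epsilon^{(i)}.$$ Then for every disturbance sequence $\mathbf w\in\ell_p^n$, the closed-loop trajectories of the plant under the concatenated controller $\tilde{\mathcal M}$ satisfy $\mathbf x\in\ell_p^n$ and $\mathbf u\in\ell_p^m$; i.e. the resulting time-varying closed loop is $\ell_p$-stable.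
   Context: Notation: $\ell^n$ is the set of sequences $\mathbf v=(v_0,v_1,\dots)$ with $v_t\in\mathbb R^n$; $|\cdot|$ is a fixed vector norm; $\|\mathbf v\|_p=(\sum_t|v_t|^p)^{1/p}$ for $p<\infty$ and $\|\mathbf v\|_\infty=\sup_t|v_t|$; $\ell_p^n=\{\mathbf v\in\ell^n:\|\mathbf v\|_p<\infty\}$; $v_{a:b}=(v_a,\dots,v_b)$, and norms of finite segments are defined in the same way. An operator $\mathbf A:\ell^n\to\ell^m$ is causal if $(\mathbf A(\mathbf x))_t$ depends only on $x_{0:t}$. Plant: $x_t=f_{t-1}(x_{t-1},u_{t-1})+w_t$ for $t\ge1$, with $x_t\in\mathbb R^n$, $u_t\in\mathbb R^m$, and the convention $w_0=x_0$. Standing assumption on the plant (input-to-state operator $\mathcal F:(\mathbf u,\mathbf w)\mapsto\mathbf x$ with finite $\ell_p$-gain $\gamma(\mathcal F)$, where an initial state is treated as a disturbance impulse): for every starting time $s\ge0$, every state $x_s$, every $N\ge s$ and all input and disturbance sequences, the trajectory started from $x_s$ at time $s$ satisfies $\|x_{s:N}\|_p\le\gamma(\mathcal F)\,|x_s|+\gamma(\mathcal F)\big(\|u_{s:N}\|_p+\|w_{s:N}\|_p\big)$; in particular (for $s=0$, $x_0=w_0$) $\|x_{0:N}\|_p\le\gamma(\mathcal F)(\|u_{0:N}\|_p+\|w_{0:N}\|_p)$. Controller operators: each $\mathcal M^{(i)}:\ell^n\to\ell^m$, $i\ge0$, is a causal operator (e.g. a time-invariant dynamical system started at zero internal state) with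 finite $\ell_p$-gain $\gamma(\mathcal M^{(i)})>0$, in the sense that for every input sequence $\mathbf z$ and every $N\ge0$, $\|(\mathcal M^{(i)}(\mathbf z))_{0:N}\|_p\le\gamma(\mathcal M^{(i)})\|z_{0:N}\|_p$. Update instants: $t_0=0$, $t_{i+1}=t_i+\mu(x_{t_i})$ for $i\ge0$, where $\mu:\mathbb R^n\to\mathbb N_{\ge1}$ (finitely or infinitely many updates; if finitely many, the last window is infinite). Concatenated controller $\tilde{\mathcal M}$: for $t\in[t_i,t_{i+1})$, $u_t=(\mathcal M^{(i)}(\mathbf z^{(i)}))_{t-t_i}$, where $\mathbf z^{(i)}=(x_{t_i},w_{t_i+1},w_{t_i+2},\dots)$ and $\mathcal M^{(i)}$ is (re)initialized with zero internal state at time $t_i$. (For $i=0$, $\mathbf z^{(0)}=\mathbf w$ since $w_0=x_0$.) *)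

(* Defs.v *)
From HB Require Import structures.
From mathcomp Require Import all_boot all_order all_algebra.
From mathcomp Require Import reals ereal exp.
Set Implicit Arguments. Unset Strict Implicit. Unset Printing Implicit Defensive.
Import Order.TTheory GRing.Theory Num.Theory.
Local Open Scope ring_scope.

Section Defs.
Variable R : realType.

Definition is_vnorm (k : nat) (nrm : 'cV[R]_k -> R) : Prop :=
  [/\ forall x y, nrm (x + y) <= nrm x + nrm y,
      forall (a : R) x, nrm (a *: x) = `|a| * nrm x
    & forall x, nrm x = 0 -> x = 0].

(* ||g_{a:b}||_p for a scalar (nonnegative) sequence g, p \in [1,oo]
   represented in \bar R: finite p = r%:E uses (sum |.|^r)^(1/r),
   p = +oo uses the max.  (-oo is excluded by the hypothesis 1 <= p.) *)
Definition seg_norm (p : \bar R) (g : nat -> R) (a b : nat) : R :=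
  match p with
  | r%:E => powR (\sum_(a <= t < b.+1) powR (g t) r) r^-1
  | _ => \big[Num.max/0]_(a <= t < b.+1) g t
  end.

(* ||g||_p < oo, i.e. the partial norms ||g_{0:N}||_p are bounded
   (they are nondecreasing in N, ||g||_p being their supremum). *)
Definition lp_seq (p : \bar R) (g : nat -> R) : Prop :=
  exists C : R, forall N, seg_norm p g 0 N <= C.

Fixpoint ptraj (n m : nat) (f : nat -> 'cV[R]_n -> 'cV[R]_m -> 'cV[R]_n)
  (s : nat) (xs : 'cV[R]_n) (u : nat -> 'cV[R]_m) (w : nat -> 'cV[R]_n)
  (t : nat) : 'cV[R]_n :=
  match t with
  | 0 => xs
  | t'.+1 => if (s <= t')%N then f t' (ptraj f s xs u w t') (u t') + w t'.+1
             else xs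
  end.

Definition plant_gain (n m : nat) (p : \bar R) (nx : 'cV[R]_n -> R)
  (nu : 'cV[R]_m -> R) (f : nat -> 'cV[R]_n -> 'cV[R]_m -> 'cV[R]_n)
  (gF : R) : Prop :=
  forall (s : nat) (xs : 'cV[R]_n) (u : nat -> 'cV[R]_m)
         (w : nat -> 'cV[R]_n) (N : nat), (s <= N)%N ->
    seg_norm p (fun t => nx (ptraj f s xs u w t)) s N
      <= gF * nx xs + gF * (seg_norm p (fun t => nu (u t)) s N
                            + seg_norm p (fun t => nx (w t)) s N).

Definition causal (n m : nat) (M : (nat -> 'cV[R]_n) -> nat -> 'cV[R]_m)
  : Prop :=
  forall z z' t, (forall k, (k <= t)%N -> z k = z' k) -> M z t = M z' t.

Definition op_gain (n m : nat) (p : \bar R) (nx : 'cV[R]_n -> R)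
  (nu : 'cV[R]_m -> R) (M : (nat -> 'cV[R]_n) -> nat -> 'cV[R]_m) (g : R)
  : Prop :=
  forall z N, seg_norm p (fun t => nu (M z t)) 0 N
              <= g * seg_norm p (fun t => nx (z t)) 0 N.

Definition zseq (n : nat) (xti : 'cV[R]_n) (ti : nat) (w : nat -> 'cV[R]_n)
  : nat -> 'cV[R]_n :=
  fun k => if k is 0 then xti else w (ti + k)%N.

Section ClosedLoop.
Variables (n m : nat).
Variable f : nat -> 'cV[R]_n -> 'cV[R]_m -> 'cV[R]_n.
Variable M : nat -> (nat -> 'cV[R]_n) -> nat -> 'cV[R]_m.
(* mu x = Some k : next update k >= 1 steps later; None : no further update
   (last window infinite). *)
Variable mu : 'cV[R]_n -> option nat.
Variable w : nat -> 'cV[R]_n.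

(* closed-loop state at time t: (x_t, current window index i, t_i, x_{t_i}) *)
Fixpoint cl_state (t : nat) : 'cV[R]_n * nat * nat * 'cV[R]_n :=
  match t with
  | 0 => (w 0, 0%N, 0%N, w 0)
  | t'.+1 =>
      let: (x, i, ti, xti) := cl_state t' in
      let u := M i (zseq xti ti w) (t' - ti)%N in
      let x' := f t' x u + w t'.+1 in
      match mu xti with
      | Some k => if (ti + k == t'.+1)%N then (x', i.+1, t'.+1, x')
                  else (x', i, ti, xti)
      | None => (x', i, ti, xti)
      end
  end.

Definition cl_x (t : nat) : 'cV[R]_n := (cl_state t).1.1.1.

Definition cl_u (t : nat) : 'cV[R]_m :=
  let: (_, i, ti, xti) := cl_state t in M i (zseq xti ti w) (t - ti)%N.

Fixpoint upd_time (i : nat) : option nat :=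
  match i with
  | 0 => Some 0%N
  | i'.+1 => match upd_time i' with
             | Some ti => match mu (cl_x ti) with
                          | Some k => Some (ti + k)%N
                          | None => None
                          end
             | None => None
             end
  end.
End ClosedLoop.
End Defs.

(* Main.v *)
Require Import Defs.
From HB Require Import structures.
From mathcomp Require Import all_boot all_order all_algebra.
From mathcomp Require Import reals ereal exp.
From mathcomp Require Import lra ring.
Import Order.TTheory GRing.Theory Num.Theory.
Local Open Scope ring_scope.

Lemma pw_inv {R : realType} (q x : R) : 0 < q -> 0 <= x ->
  powR (powR x q) q^-1 = x.
Proof. by move=> q0 x0; rewrite -powRrM mulfV ?gt_eqF // powRr1. Qed.
Arguments pw_inv {R q x}.

Lemma pw_inv' {R : realType} (q x : R) : 0 < q -> 0 <= x ->
  powR (powR x q^-1) q = x.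
Proof. by move=> q0 x0; rewrite -powRrM mulVf ?gt_eqF // powRr1. Qed.
Arguments pw_inv' {R q x}.

Lemma pw_le {R : realType} (s x y : R) : 0 <= s -> 0 <= x -> x <= y ->
  powR x s <= powR y s.
Proof.
move=> s0 x0 xy; apply: (ge0_ler_powR s0) => //; rewrite nnegrE //.
exact: le_trans xy.
Qed.
Arguments pw_le {R s x y}.

Lemma crude1 {R : realType} (q a b : R) : 1 <= q -> 0 <= a -> 0 <= b ->
  powR (a + b) q <= powR 2 q * (powR a q + powR b q).
Proof.
move=> q1 a0 b0; have q0 : 0 <= q by apply: le_trans q1.
have ha := powR_ge0 a q; have hb := powR_ge0 b q; have h2 := powR_ge0 2 q.
have [ab|ba] := leP a b.
- have e : a + b <= 2 * b by lra.
  apply: (le_trans (pw_le q0 _ e)); first lra.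
  rewrite powRM //; apply: ler_wpM2l => //; lra.
- have e : a + b <= 2 * a by lra.
  apply: (le_trans (pw_le q0 _ e)); first lra.
  rewrite powRM //; first (apply: ler_wpM2l => //; lra); lra.
Qed.

Lemma crude2 {R : realType} (q a b : R) : 1 <= q -> 0 <= a -> 0 <= b ->
  powR a q + powR b q <= powR (2 * (a + b)) q.
Proof.
move=> q1 a0 b0; have q0 : 0 <= q by apply: le_trans q1.
have h1 : powR a q <= powR (a + b) q by apply: pw_le => //; lra.
have h2 : powR b q <= powR (a + b) q by apply: pw_le => //; lra.
have h3 : 2 <= powR 2 q by apply: le1r_powR => //; lra.
have h4 := powR_ge0 (a + b) q.
rewrite powRM //; last lra.
nra.
Qed.

Lemma root_le {R : realType} (q P C : R) : 0 < q -> 0 <= P -> 0 <= C ->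
  P <= powR C q -> powR P q^-1 <= C.
Proof.
move=> q0 P0 C0 h; rewrite -[X in _ <= X](pw_inv q0 C0).
by apply: pw_le => //; rewrite invr_ge0 ltW.
Qed.

Lemma root_le_conv {R : realType} (q P C : R) : 0 < q -> 0 <= P ->
  powR P q^-1 <= C -> P <= powR C q.
Proof.
move=> q0 P0 h; rewrite -(pw_inv' q0 P0).
by apply: pw_le => //; [exact: ltW| exact: powR_ge0].
Qed.

Lemma seg_ge0 {R : realType} (p : \bar R) g a b : 0 <= seg_norm p g a b.
Proof. by case: p => [q| |] /=; rewrite ?powR_ge0 // bigmax_ge_id. Qed.

Lemma seg_ext {R : realType} (p : \bar R) (g g' : nat -> R) a b :
  (forall t, (a <= t <= b)%N -> g t = g' t) ->
  seg_norm p g a b = seg_norm p g' a b.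
Proof.
move=> h.
have h' : forall t, (a <= t < b.+1)%N -> g t = g' t.
  by move=> t /andP[h1 h2]; rewrite h // h1 -ltnS h2.
case: p => [q| |] /=.
- congr (powR _ _); apply: eq_big_nat => t ht; by rewrite h'.
- by apply: eq_big_nat => t ht; rewrite h'.
- by apply: eq_big_nat => t ht; rewrite h'.
Qed.

Lemma big_shift {T : Type} (idx : T) (op : T -> T -> T) (F : nat -> T) a b :
  (a <= b)%N ->
  \big[op/idx]_(a <= t < b.+1) F t = \big[op/idx]_(0 <= t < (b - a).+1) F (t + a)%N.
Proof. by move=> ab; rewrite -{1}[a]add0n big_addn subSn. Qed.

Lemma seg_shift {R : realType} (p : \bar R) (g : nat -> R) a b : (a <= b)%N ->
  seg_norm p g a b = seg_norm p (fun k => g (k + a)%N) 0 (b - a).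
Proof. by move=> ab; case: p => [q| |] /=; rewrite big_shift. Qed.

Lemma sum_elem {R : realType} (F : nat -> R) a b t :
  (forall i, 0 <= F i) -> (a <= t <= b)%N -> F t <= \sum_(a <= i < b.+1) F i.
Proof.
move=> F0 /andP[h1 h2].
rewrite (big_cat_nat _ (n := t)) //=; last by apply: leqW.
rewrite (@big_ltn _ _ _ t) //.
have : 0 <= \sum_(a <= i < t) F i by apply: sumr_ge0.
have : 0 <= \sum_(t.+1 <= i < b.+1) F i by apply: sumr_ge0.
lra.
Qed.

Lemma sum_mono_range {R : realType} (F : nat -> R) a' a b :
  (forall i, 0 <= F i) -> (a' <= a <= b.+1)%N ->
  \sum_(a <= i < b.+1) F i <= \sum_(a' <= i < b.+1) F i.
Proof.
move=> F0 /andP[h1 h2].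
rewrite [X in _ <= X](big_cat_nat _ (n := a)) //=.
have : 0 <= \sum_(a' <= i < a) F i by apply: sumr_ge0.
lra.
Qed.

Lemma seg_elem {R : realType} (p : \bar R) (g : nat -> R) a b t :
  (1%:E <= p)%E -> 0 <= g t -> (a <= t <= b)%N -> g t <= seg_norm p g a b.
Proof.
move=> hp g0 ht; case: p hp => [q| |] //= hp.
- rewrite lee_fin in hp; have q0 : 0 < q by lra.
  rewrite -{1}(pw_inv q0 g0); apply: pw_le.
  + by rewrite invr_ge0 ltW.
  + exact: powR_ge0.
  + by apply: (sum_elem (fun i => powR (g i) q)) => // i; exact: powR_ge0.
- apply: le_bigmax_seq => //; rewrite mem_index_iota.
  by case/andP: ht => -> ; rewrite ltnS.
Qed.

Lemma seg_mono_range {R : realType} (p : \bar R) (g : nat -> R) a' a b :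
  (1%:E <= p)%E -> (a' <= a <= b.+1)%N -> seg_norm p g a b <= seg_norm p g a' b.
Proof.
move=> hp ht; case: p hp => [q| |] //= hp.
- rewrite lee_fin in hp; have q0 : 0 < q by lra.
  apply: pw_le.
  + by rewrite invr_ge0 ltW.
  + by apply: sumr_ge0 => i _; exact: powR_ge0.
  + by apply: (sum_mono_range (fun i => powR (g i) q)) => // i; exact: powR_ge0.
- case/andP: ht => h1 h2; exact: le_bigmax_nat.
Qed.

Lemma seg_zero {R : realType} (p : \bar R) (g : nat -> R) a b :
  (1%:E <= p)%E -> (forall t, (a <= t <= b)%N -> g t = 0) -> seg_norm p g a b = 0.
Proof.
move=> hp h; rewrite (@seg_ext R p g (fun=> 0) a b h).
case: p hp => [q| |] //= hp.
- rewrite lee_fin in hp; have q0 : 0 < q by lra.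
  rewrite powR0 ?gt_eqF // big1 // powR0 // invr_eq0 gt_eqF //.
- by elim/big_rec: _ => // i x _ ->; rewrite maxxx.
Qed.
Arguments crude1 {R q a b}.
Arguments crude2 {R q a b}.
Arguments root_le {R q P C}.
Arguments root_le_conv {R q P C}.

Definition Psum {R : realType} (q : R) (g : nat -> R) a b :=
  \sum_(a <= t < b.+1) powR (g t) q.

Lemma seg_Psum {R : realType} (q : R) g a b :
  seg_norm q%:E g a b = powR (Psum q g a b) q^-1.
Proof. by []. Qed.

Lemma sum_lemma {R : realType} (p : \bar R) (idx tst : nat -> nat)
  (v wn rho : nat -> R) (D : R) :
  (1%:E <= p)%E -> 0 <= D -> (forall t, 0 <= v t) -> (forall t, 0 <= wn t) ->
  (forall i, 0 <= rho i) -> rho 0%N = 0 ->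
  (forall N, (tst N <= N)%N) ->
  (forall N, tst N = 0%N \/ (idx (tst N).-1).+1 = idx N) ->
  (forall N, seg_norm p v (tst N) N
             <= 2 * rho (idx N) + D * seg_norm p wn (tst N) N) ->
  lp_seq p wn -> lp_seq p (fun i => rho i.+1) -> lp_seq p v.
Proof.
move=> hp D0 v0 w0 r0 rho0 hts hidx hwin [Cw hCw] [Cr hCr].
have Cw0 : 0 <= Cw := le_trans (seg_ge0 _ _ _ _) (hCw 0%N).
have Cr0 : 0 <= Cr := le_trans (seg_ge0 _ _ _ _) (hCr 0%N).
case: p hp hCw hCr hwin => [q| |] // hp hCw hCr hwin; last first.
-
  exists (2 * Cr + D * Cw) => N /=.
  apply: bigmax_le; first by have := mulr_ge0 D0 Cw0; lra.
  move=> t _.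
  have h1' : v t <= seg_norm +oo%E v (tst t) t by apply: seg_elem => //; rewrite hts leqnn.
  apply: (le_trans h1'); apply: (le_trans (hwin t)).
  have hr : rho (idx t) <= Cr.
    case E: (idx t) => [|j]; first by rewrite rho0.
    apply: le_trans (hCr j).
    by apply: (@seg_elem R +oo%E (fun i => rho i.+1)) => //; rewrite leqnn.
  have hw : seg_norm +oo%E wn (tst t) t <= Cw.
    apply: le_trans (hCw t); apply: seg_mono_range => //.
    by rewrite leq0n /=; apply: leqW; exact: hts.
  apply: lerD; first by apply: ler_wpM2l => //; lra.
  exact: ler_wpM2l.
rewrite lee_fin in hp; have q0 : 0 < q by lra.
have qi0 : 0 <= q^-1 by rewrite invr_ge0 ltW.
pose S := Psum q.
have S0 : forall g a b, 0 <= S g a b.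
  by move=> g a b; apply: sumr_ge0 => i _; exact: powR_ge0.
pose K := powR 2 q * (powR 2 q + powR D q).
have K0 : 0 <= K.
  by rewrite /K; apply: mulr_ge0; rewrite ?addr_ge0 ?powR_ge0.
have win : forall N, S v (tst N) N
                     <= K * (powR (rho (idx N)) q + S wn (tst N) N).
  move=> N; have h := hwin N; rewrite !seg_Psum in h.
  set b := powR (S wn (tst N) N) q^-1 in h.
  have b0 : 0 <= b by exact: powR_ge0.
  have e1 : S v (tst N) N <= powR (2 * rho (idx N) + D * b) q.
    rewrite -(pw_inv' q0 (S0 v (tst N) N)); apply: pw_le.
    - exact: ltW.
    - exact: powR_ge0.
    - exact: h.
  apply: (le_trans e1).
  have r0' := r0 (idx N).
  have two0 : (0 : R) <= 2 by rewrite ler0n.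
  apply: (le_trans (crude1 hp _ _)); first exact: mulr_ge0.
    exact: mulr_ge0.
  rewrite !powRM //.
  rewrite /b pw_inv' //.
  have := powR_ge0 2 q; have := powR_ge0 D q; have := powR_ge0 (rho (idx N)) q.
  have := S0 wn (tst N) N.
  rewrite /K -mulrA; move=> h1 h2 h3 h4; apply: ler_wpM2l => //.
  rewrite -subr_ge0.
  have -> : (powR 2 q + powR D q) * (powR (rho (idx N)) q + S wn (tst N) N) -
     (powR 2 q * powR (rho (idx N)) q + powR D q * S wn (tst N) N)
     = powR 2 q * S wn (tst N) N + powR D q * powR (rho (idx N)) q by ring.
  by apply: addr_ge0; apply: mulr_ge0.
have main : forall N, S v 0 N
   <= K * (\sum_(0 <= j < (idx N).+1) powR (rho j) q + S wn 0 N).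
  elim/ltn_ind => N IH.
  have hwN := win N.
  have hR : powR (rho (idx N)) q <= \sum_(0 <= j < (idx N).+1) powR (rho j) q.
    apply: (sum_elem (fun j => powR (rho j) q)) => //; last by rewrite leqnn.
    by move=> i; exact: powR_ge0.
  case E: (tst N) => [|t'].
  - rewrite E in hwN; apply: (le_trans hwN); apply: ler_wpM2l => //.
    have := S0 wn 0%N N; lra.
  - have Ei : (idx t').+1 = idx N.
      by case: (hidx N); rewrite E.
    have tN : (t'.+1 <= N)%N by rewrite -E hts.
    have IHt := IH t' tN.
    have split1 : S v 0 N = S v 0 t' + S v t'.+1 N.
      by rewrite /S /Psum (big_cat_nat _ (n := t'.+1)) //; exact: leqW tN.
    have split2 : S wn 0 N = S wn 0 t' + S wn t'.+1 N.
      by rewrite /S /Psum (big_cat_nat _ (n := t'.+1)) //; exact: leqW tN.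
    have split3 : \sum_(0 <= j < (idx N).+1) powR (rho j) q =
       \sum_(0 <= j < (idx t').+1) powR (rho j) q + powR (rho (idx N)) q.
      by rewrite big_nat_recr //= Ei.
    rewrite E in hwN.
    rewrite split1 split2 split3.
    apply: le_trans (lerD IHt hwN) _; rewrite -mulrDr; apply: ler_wpM2l => //.
    lra.
have Bw : forall N, S wn 0 N <= powR Cw q.
  by move=> N; apply: root_le_conv => //; rewrite -seg_Psum; exact: hCw.
have Br : forall i, \sum_(0 <= j < i.+1) powR (rho j) q <= powR Cr q.
  move=> i; rewrite big_nat_recl // rho0 powR0 ?gt_eqF // add0r.
  apply: le_trans (root_le_conv q0 (S0 _ 0%N i) (hCr i : powR (Psum q _ 0 i) q^-1 <= Cr)).
  rewrite /S /Psum big_nat_recr //=; have := powR_ge0 (rho i.+1) q; lra.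
exists (powR (K * (powR Cr q + powR Cw q)) q^-1) => N.
rewrite seg_Psum; apply: pw_le; [exact: qi0 | exact: (S0 v 0%N N) |].
apply: (le_trans (main N)); apply: ler_wpM2l => //.
have := Br (idx N); have := Bw N; lra.
Qed.
Arguments sum_lemma {R p idx tst v wn rho D}.

Section CL.
Context {R : realType} {n m : nat}
  (f : nat -> 'cV[R]_n -> 'cV[R]_m -> 'cV[R]_n)
  (M : nat -> (nat -> 'cV[R]_n) -> nat -> 'cV[R]_m)
  (mu : 'cV[R]_n -> option nat) (w : nat -> 'cV[R]_n).

Let st t := cl_state f M mu w t.
Definition idxs t := (cl_state f M mu w t).1.1.2.
Definition tsts t := (cl_state f M mu w t).1.2.
Definition xss t := (cl_state f M mu w t).2.

Lemma cl_x_succ t :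
  cl_x f M mu w t.+1 = f t (cl_x f M mu w t) (cl_u f M mu w t) + w t.+1.
Proof.
rewrite /cl_x /cl_u /=; case: (cl_state f M mu w t) => [[[x i] ti] xti] /=.
by case: (mu xti) => [k|] //=; case: ifP.
Qed.

Lemma cl_uE t : cl_u f M mu w t = M (idxs t) (zseq (xss t) (tsts t) w) (t - tsts t)%N.
Proof. by rewrite /cl_u /idxs /xss /tsts; case: (cl_state f M mu w t) => [[[x i] ti] xti]. Qed.

Lemma st_step t :
  (idxs t.+1 = idxs t /\ tsts t.+1 = tsts t /\ xss t.+1 = xss t) \/
  (idxs t.+1 = (idxs t).+1 /\ tsts t.+1 = t.+1 /\ xss t.+1 = cl_x f M mu w t.+1 /\
   exists k, mu (xss t) = Some k /\ (tsts t + k)%N = t.+1).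
Proof.
rewrite /idxs /tsts /xss /cl_x /=.
case: (cl_state f M mu w t) => [[[x i] ti] xti] /=.
case E: (mu xti) => [k|]; last by left.
case: ifP => [/eqP h|_]; last by left.
by right; split => //; split => //; split => //; exists k.
Qed.

Lemma cl_inv N :
  [/\ (tsts N <= N)%N, upd_time f M mu w (idxs N) = Some (tsts N),
      xss N = cl_x f M mu w (tsts N),
      (forall t, (tsts N <= t <= N)%N ->
         idxs t = idxs N /\ tsts t = tsts N /\ xss t = xss N) &
      (tsts N = 0%N \/ (idxs (tsts N).-1).+1 = idxs N)].
Proof.
elim: N => [|N [h1 h2 h3 h4 h5]].
  split => //; first by move=> t; rewrite leqn0 => /eqP ->.
  by left.
case: (st_step N) => [[e1 [e2 e3]]|[e1 [e2 [e3 [k [ek ek2]]]]]].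
- rewrite e1 e2 e3; split => //.
  + by apply: leqW.
  + move=> t /andP[t1 t2]; rewrite leq_eqVlt in t2.
    case/orP: t2 => [/eqP ->|t2]; first by rewrite e1 e2 e3.
    by apply: h4; rewrite t1 -ltnS.
- rewrite e1 e2 e3; split => //.
  + by rewrite /= h2 -h3 ek ek2.
  + by move=> t; rewrite -eqn_leq => /eqP <-; rewrite e1 e2 e3.
  + by right.
Qed.

Lemma ptraj_start s xs (u : nat -> 'cV[R]_m) (ww : nat -> 'cV[R]_n) :
  ptraj f s xs u ww s = xs.
Proof. by case: s => //= s; rewrite ltnn. Qed.

Definition uwin N t := M (idxs N) (zseq (xss N) (tsts N) w) (t - tsts N)%N.

Lemma win_u N t : (tsts N <= t <= N)%N -> cl_u f M mu w t = uwin N t.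
Proof.
move=> ht; have [_ _ _ h4 _] := cl_inv N.
have [e1 [e2 e3]] := h4 t ht.
by rewrite cl_uE /uwin e1 e2 e3.
Qed.

Lemma win_traj N t : (tsts N <= t <= N)%N ->
  cl_x f M mu w t = ptraj f (tsts N) (xss N) (uwin N) w t.
Proof.
have [h1 _ h3 _ _] := cl_inv N.
move=> /andP[t1 t2]; rewrite -(subnKC t1) in t2 *.
elim: (t - tsts N)%N t2 => [|d IH] t2.
  by rewrite addn0 ptraj_start h3.
rewrite addnS cl_x_succ /= leq_addr IH; last by apply: ltnW; rewrite -addnS.
rewrite (win_u N) //; by rewrite leq_addr /=; apply: ltnW; rewrite -addnS.
Qed.
End CL.

Lemma vnorm0 {R : realType} k (nrm : 'cV[R]_k -> R) : is_vnorm nrm -> nrm 0 = 0.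
Proof.
case=> _ hZ _; have := hZ 0 0; rewrite scale0r normr0 mul0r; exact.
Qed.

Lemma vnorm_ge0 {R : realType} k (nrm : 'cV[R]_k -> R) : is_vnorm nrm ->
  forall x, 0 <= nrm x.
Proof.
move=> hn x; have h0 := vnorm0 _ _ hn; case: hn => hT hZ _.
have := hT x (- x); rewrite subrr h0 -scaleN1r hZ normrN normr1 mul1r.
lra.
Qed.

Lemma seg_single {R : realType} (p : \bar R) (g : nat -> R) a :
  (1%:E <= p)%E -> 0 <= g a -> seg_norm p g a a = g a.
Proof.
move=> hp g0; case: p hp => [q| |] //= hp.
- rewrite lee_fin in hp; have q0 : 0 < q by lra.
  by rewrite big_nat1 pw_inv.
- by rewrite big_ltn // big_geq //; apply/max_idPl.
Qed.

Lemma zbound {R : realType} {n} (p : \bar R) (nx : 'cV[R]_n -> R) a ts w K :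
  (1%:E <= p)%E -> (forall x, 0 <= nx x) ->
  seg_norm p (fun k => nx (zseq a ts w k)) 0 K
  <= 2 * (nx a + seg_norm p (fun t => nx (w t)) ts (ts + K)%N).
Proof.
move=> hp nx0.
have sw0 := seg_ge0 p (fun t => nx (w t)) ts (ts + K)%N.
have a0 := nx0 a.
case: p hp sw0 => [q| |] // hp sw0; last first.
- rewrite {1}/seg_norm big_seq; apply: bigmax_le; first lra.
  move=> [|k]; first by rewrite (_ : zseq a ts w 0 = a) //; lra.
  rewrite (_ : zseq a ts w k.+1 = w (ts + k.+1)%N) // mem_index_iota ltnS => hk.
  have : nx (w (ts + k.+1)%N) <= seg_norm +oo%E (fun t => nx (w t)) ts (ts + K).
    apply: (@seg_elem R +oo%E (fun t => nx (w t))) => //.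
    by rewrite leq_addr /= leq_add2l.
  lra.
rewrite lee_fin in hp; have q0 : 0 < q by lra.
rewrite !seg_Psum in sw0 *.
set b := powR (Psum q (fun t => nx (w t)) ts (ts + K)) q^-1 in sw0 *.
have two0 : (0 : R) <= 2 by rewrite ler0n.
apply: root_le => //.
- by apply: sumr_ge0 => i _; exact: powR_ge0.
- by apply: mulr_ge0 => //; lra.
apply: le_trans (crude2 hp a0 sw0).
rewrite /b pw_inv' //; last by apply: sumr_ge0 => i _; exact: powR_ge0.
rewrite /Psum big_nat_recl //= big_shift ?leq_addr // addKn big_nat_recl //=.
rewrite lerD2l add0n; set T := \sum_(0 <= i < K) _.
have -> : T = \sum_(0 <= i < K) powR (nx (w (i.+1 + ts)%N)) q.
  by apply: eq_big_nat => i _; rewrite addnC.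
have := powR_ge0 (nx (w ts)) q; lra.
Qed.

Lemma arithX1 {R : realType} (gF g gbar a0 sw su sx rr : R) :
  1 <= gF -> 0 <= g -> g <= gbar -> 0 <= a0 -> 0 <= sw -> 0 <= su ->
  su <= 2 * g * (a0 + sw) -> sx <= gF * a0 + gF * (su + sw) ->
  gF * (g + 1) * a0 <= rr ->
  sx <= 2 * rr + 4 * gF * (1 + gbar) * sw /\ su <= 2 * rr + 4 * gF * (1 + gbar) * sw.
Proof.
move=> h1 h2 h3 h4 h5 h6 h7 h8 h9.
have e1 : gF * su <= gF * (2 * g * (a0 + sw)) by apply: ler_wpM2l => //; lra.
have e2 : g * a0 <= gF * (g + 1) * a0.
  apply: ler_wpM2r => //; nra.
have e3 : g * sw <= gbar * sw by apply: ler_wpM2r.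
have e4 : gF * (g * sw) <= gF * (gbar * sw) by apply: ler_wpM2l => //; lra.
have e5 : sw <= gF * sw by nra.
have e6 : gbar * sw <= gF * (gbar * sw).
  have : 0 <= gbar * sw by apply: mulr_ge0 => //; lra.
  nra.
split; nra.
Qed.

Lemma arithX2 {R : realType} (gF g gbar a0 sw su sx : R) :
  1 <= gF -> 0 <= g -> g <= gbar -> 0 <= a0 -> a0 <= sw -> 0 <= su ->
  su <= 2 * g * (a0 + sw) -> sx <= gF * a0 + gF * (su + sw) ->
  sx <= 4 * gF * (1 + gbar) * sw /\ su <= 4 * gF * (1 + gbar) * sw.
Proof.
move=> h1 h2 h3 h4 h5 h6 h7 h8.
have sw0 : 0 <= sw by lra.
have e0 : su <= 4 * gbar * sw.
  have : g * (a0 + sw) <= gbar * (2 * sw).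
    apply: ler_pM => //; lra.
  lra.
have e1 : gF * su <= gF * (4 * gbar * sw) by apply: ler_wpM2l => //; lra.
have e2 : gF * a0 <= gF * sw by apply: ler_wpM2l => //; lra.
have e6 : gbar * sw <= gF * (gbar * sw).
  have : 0 <= gbar * sw by apply: mulr_ge0 => //; lra.
  nra.
split; nra.
Qed.
Arguments arithX1 {R gF g gbar a0 sw su sx rr}.
Arguments arithX2 {R gF g gbar a0 sw su sx}.

Theorem theorem2 (R : realType) (n m : nat) (p : \bar R)
  (nx : 'cV[R]_n -> R) (nu : 'cV[R]_m -> R)
  (f : nat -> 'cV[R]_n -> 'cV[R]_m -> 'cV[R]_n) (gF : R)
  (M : nat -> (nat -> 'cV[R]_n) -> nat -> 'cV[R]_m) (gM : nat -> R)
  (gbar : R) (mu : 'cV[R]_n -> option nat) (r eps : nat -> R) :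
  (1%:E <= p)%E ->
  is_vnorm nx -> is_vnorm nu ->
  plant_gain p nx nu f gF ->
  (forall i, causal (M i)) ->
  (forall i, 0 < gM i) ->
  (forall i, op_gain p nx nu (M i) (gM i)) ->
  0 < gbar ->
  (forall i, gM i <= gbar) ->
  (forall x k, mu x = Some k -> (1 <= k)%N) ->
  (forall i, (1 <= i)%N -> 0 <= r i) ->
  lp_seq p (fun i => `|r i.+1|) ->
  (forall i, (1 <= i)%N -> 0 < eps i) ->
  (forall i, (1 <= i)%N -> gF * (gM i + 1) * eps i <= r i) ->
  forall w : nat -> 'cV[R]_n,
    lp_seq p (fun t => nx (w t)) ->
    (forall i ti, (1 <= i)%N -> upd_time f M mu w i = Some ti ->
                  nx (cl_x f M mu w ti) <= eps i) ->
    lp_seq p (fun t => nx (cl_x f M mu w t)) /\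
    lp_seq p (fun t => nu (cl_u f M mu w t)).
Proof.
move=> hp hnx hnu hplant _ hgM0 hop hgbar hgMb _ hr0 hrl _ hre w hw hadm.
have nx0 := vnorm_ge0 _ _ hnx; have nu0 := vnorm_ge0 _ _ hnu.
have nxz := vnorm0 _ _ hnx; have nuz := vnorm0 _ _ hnu.
pose rho i := if i is 0 then 0 else r i.
have rho_ge0 : forall i, 0 <= rho i by case=> //= i; apply: hr0.
have hrho : lp_seq p (fun i => rho i.+1).
  case: hrl => C hC; exists C => N.
  rewrite (@seg_ext R p (fun i => rho i.+1) (fun i => `|r i.+1|) 0 N) //.
  by move=> t _ /=; rewrite ger0_norm // hr0.
pose ts N := tsts f M mu w N.
pose ix N := idxs f M mu w N.
pose a N := xss f M mu w N.
have HU : forall N, seg_norm p (fun t => nu (cl_u f M mu w t)) (ts N) N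
   <= gM (ix N) * seg_norm p (fun k => nx (zseq (a N) (ts N) w k)) 0 (N - ts N).
  move=> N; have [h1 _ _ _ _] := cl_inv f M mu w N.
  rewrite (@seg_ext R p _ (fun t => nu (uwin f M mu w N t))); last first.
    by move=> t ht; rewrite (win_u f M mu w N t ht).
  rewrite seg_shift //.
  rewrite (@seg_ext R p _ (fun k => nu (M (ix N) (zseq (a N) (ts N) w) k))); last first.
    by move=> t _; rewrite /uwin addnK.
  exact: hop.
have HX : forall N, seg_norm p (fun t => nx (cl_x f M mu w t)) (ts N) N
   <= gF * nx (a N) + gF * (seg_norm p (fun t => nu (cl_u f M mu w t)) (ts N) N
                            + seg_norm p (fun t => nx (w t)) (ts N) N).
  move=> N; have [h1 _ _ _ _] := cl_inv f M mu w N.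
  rewrite (@seg_ext R p _ (fun t => nx (ptraj f (ts N) (a N) (uwin f M mu w N) w t)));
    last by move=> t ht; rewrite (win_traj f M mu w N t ht).
  rewrite (@seg_ext R p (fun t => nu (cl_u f M mu w t)) (fun t => nu (uwin f M mu w N t)));
    last by move=> t ht; rewrite (win_u f M mu w N t ht).
  exact: hplant.
have HZ : forall N, seg_norm p (fun k => nx (zseq (a N) (ts N) w k)) 0 (N - ts N)
   <= 2 * (nx (a N) + seg_norm p (fun t => nx (w t)) (ts N) N).
  move=> N; have [h1 _ _ _ _] := cl_inv f M mu w N.
  have := zbound p nx (a N) (ts N) w (N - ts N) hp nx0.
  by rewrite subnKC.
have dich : 1 <= gF \/ (forall x, nx x = 0).
  case: (lerP 1 gF) => [h|h]; [by left | right] => x.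
  have := hplant 0%N x (fun=> 0) (fun=> 0) 0%N (leqnn 0).
  have z1 : seg_norm p (fun t => nu ((fun=> (0 : 'cV[R]_m)) t)) 0 0 = 0.
    by apply: seg_zero => // t _; rewrite nuz.
  have z2 : seg_norm p (fun t => nx ((fun=> (0 : 'cV[R]_n)) t)) 0 0 = 0.
    by apply: seg_zero => // t _; rewrite nxz.
  rewrite z1 z2 seg_single //= addr0 mulr0 addr0 => hx.
  have hx0 := nx0 x.
  apply/eqP; rewrite eq_le hx0 andbT.
  have : (1 - gF) * nx x <= 0 by rewrite mulrBl mul1r subr_le0.
  by rewrite pmulr_rle0 // subr_gt0.
have key : exists D, 0 <= D /\
  (forall N, seg_norm p (fun t => nx (cl_x f M mu w t)) (ts N) N
             <= 2 * rho (ix N) + D * seg_norm p (fun t => nx (w t)) (ts N) N) /\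
  (forall N, seg_norm p (fun t => nu (cl_u f M mu w t)) (ts N) N
             <= 2 * rho (ix N) + D * seg_norm p (fun t => nx (w t)) (ts N) N).
  case: dich => [hg1|hz]; last first.
    exists 0; split => //; split => N.
    - have -> : seg_norm p (fun t => nx (cl_x f M mu w t)) (ts N) N = 0.
        by apply: seg_zero => // t _; rewrite hz.
      by rewrite mul0r addr0; apply: mulr_ge0 => //; rewrite ler0n.
    - apply: (le_trans (HU N)).
      have -> : seg_norm p (fun k => nx (zseq (a N) (ts N) w k)) 0 (N - ts N) = 0.
        by apply: seg_zero => // t _; rewrite hz.
      by rewrite mulr0 mul0r addr0; apply: mulr_ge0 => //; rewrite ler0n.
  exists (4 * gF * (1 + gbar)); split.
    have h4 : (0 : R) <= 4 by rewrite ler0n.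
    apply: mulr_ge0; last lra.
    apply: mulr_ge0 => //; lra.
  suff hN : forall N,
    seg_norm p (fun t => nx (cl_x f M mu w t)) (ts N) N
      <= 2 * rho (ix N) + 4 * gF * (1 + gbar) * seg_norm p (fun t => nx (w t)) (ts N) N /\
    seg_norm p (fun t => nu (cl_u f M mu w t)) (ts N) N
      <= 2 * rho (ix N) + 4 * gF * (1 + gbar) * seg_norm p (fun t => nx (w t)) (ts N) N.
    by split => N; case: (hN N).
  move=> N; have [h1 h2 h3 _ _] := cl_inv f M mu w N.
  have g0 : 0 <= gM (ix N) := ltW (hgM0 (ix N)).
  have hsu : seg_norm p (fun t => nu (cl_u f M mu w t)) (ts N) N
     <= 2 * gM (ix N) * (nx (a N) + seg_norm p (fun t => nx (w t)) (ts N) N).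
    apply: (le_trans (HU N)); have := ler_wpM2l g0 (HZ N).
    by rewrite mulrA [gM (ix N) * 2]mulrC.
  have hsx := HX N.
  have sw0 := seg_ge0 p (fun t => nx (w t)) (ts N) N.
  have su0 := seg_ge0 p (fun t => nu (cl_u f M mu w t)) (ts N) N.
  rewrite /rho; move: h2; rewrite -/(ix N) -/(ts N).
  case E: (ix N) => [|j] h2.
  - have ts0 : ts N = 0%N by case: h2.
    have ha : a N = w 0%N by rewrite /a h3 -/(ts N) ts0.
    have a0sw : nx (a N) <= seg_norm p (fun t => nx (w t)) (ts N) N.
      rewrite ha ts0; apply: (@seg_elem R p (fun t => nx (w t))) => //.
    rewrite mulr0 !add0r; rewrite E in hsu g0.
    exact: (arithX2 hg1 g0 (hgMb 0%N) (nx0 _) a0sw su0 hsu hsx).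
  - rewrite E in hsu g0.
    have hr : gF * (gM j.+1 + 1) * nx (a N) <= r j.+1.
      apply: le_trans (hre j.+1 (ltn0Sn j)).
      apply: ler_wpM2l; first by apply: mulr_ge0; lra.
      by rewrite /a h3; apply: hadm.
    exact: (arithX1 hg1 g0 (hgMb _) (nx0 _) sw0 su0 hsu hsx hr).
case: key => D [D0 [kx ku]].
have hts : forall N, (ts N <= N)%N by move=> N; case: (cl_inv f M mu w N).
have hidx : forall N, ts N = 0%N \/ (ix (ts N).-1).+1 = ix N.
  by move=> N; case: (cl_inv f M mu w N).
split.
- apply: (sum_lemma hp D0 (fun t => nx0 _) (fun t => nx0 _) rho_ge0 (erefl _) hts hidx kx hw hrho).
- apply: (sum_lemma hp D0 (fun t => nu0 _) (fun t => nx0 _) rho_ge0 (erefl _) hts hidx ku hw hrho).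
Qed.
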